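(* Let $G=(V,E)$ be a connected undirected $(D,c)$-uniform graph with $n=|V|$ vertices and $\delta$-mixing time $T(n)$ for $\delta=\frac{1}{(2cn)^2}$. For an edge set $S\subseteq E$ with $|S|=k$, the probability $P_{\ge 1}$ that a ''good start'' random walk of length $t$ traverses at least one edge of $S$ satisfies $P_{\geq 1} = \Omega\!\left(\frac{tk}{T(n)|E|}\right)$.
   Context: An undirected graph is $(D,c)$-uniform if every vertex has degree between $D$ and $cD$ (so $D$ is the minimum degree). A standard random walk moves at each step to a uniformly random neighbor; its stationary distribution is $\mu(v)=d_v/(2|E|)$. The $\delta$-mixing time is the smallest $t'$ such that for every starting vertex the distribution $\mu'$ after $t'$ steps satisfies $\|\mu-\mu'\|_\infty\le\delta$. A ''good start'' random walk of length $t$ starts at vertex $v$ with probability $d_v/(2|E|)$ and then performs $t$ steps of the standard random walk. Standing assumptions: $T(n)$ stays bounded as $n\to\infty$, $D$ grows with $n$, and $t=O(|E|/k)$. *)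

(* Defs.v *)
From mathcomp Require Import all_boot all_order all_algebra.
Set Implicit Arguments. Unset Strict Implicit. Unset Printing Implicit Defensive.
Import Order.TTheory GRing.Theory Num.Theory.
Local Open Scope ring_scope.

Section RW.
Variables (R : realFieldType) (V : finType) (e : rel V).

Definition simple_graph : Prop := symmetric e /\ irreflexive e.

Definition connected_graph : Prop := forall u v : V, connect e u v.

Definition deg (v : V) : nat := #|[set w | e v w]|.

Definition edges : {set {set V}} :=
  [set A : {set V} | [exists u, exists v, e u v && (A == [set u; v])]].

Definition nedges : nat := #|edges|.

Definition uniform (D : nat) (c : R) : Prop :=
  forall v : V, (D <= deg v)%N /\ (deg v)%:R <= c * D%:R.

Definition stat (v : V) : R := (deg v)%:R / (2 * (nedges)%:R).

Definition trans (u w : V) : R := if e u w then ((deg u)%:R)^-1 else 0.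

Definition step (p : V -> R) : V -> R := fun w => \sum_(u : V) p u * trans u w.

Definition dirac (v : V) : V -> R := fun w => if w == v then 1 else 0.

Definition dist_after (t : nat) (v : V) : V -> R := iter t step (dirac v).

Definition mixed_at (delta : R) (t : nat) : Prop :=
  forall v w : V, `|stat w - dist_after t v w| <= delta.

Definition is_mixing_time (delta : R) (T : nat) : Prop :=
  mixed_at delta T /\ forall t' : nat, (t' < T)%N -> ~ mixed_at delta t'.

Definition walk_prob (t : nat) (w : {ffun 'I_t.+1 -> V}) : R :=
  stat (w ord0) *
  \prod_(i < t) trans (w (widen_ord (leqnSn t) i)) (w (lift ord0 i)).

Definition traverses (S : {set {set V}}) (t : nat) (w : {ffun 'I_t.+1 -> V})
  : bool :=
  [exists i : 'I_t, [set w (widen_ord (leqnSn t) i); w (lift ord0 i)] \in S].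

Definition P_ge1 (S : {set {set V}}) (t : nat) : R :=
  \sum_(w : {ffun 'I_t.+1 -> V} | traverses S w) walk_prob w.

End RW.

(* Main.v *)
Require Import Defs.
From mathcomp Require Import all_boot all_order all_algebra.
From mathcomp Require Import zify ring lra.
Set Implicit Arguments. Unset Strict Implicit. Unset Printing Implicit Defensive.
Import Order.TTheory GRing.Theory Num.Theory.
Local Open Scope ring_scope.

Section Aux.
Variables (R : realFieldType) (V : finType) (e : rel V).

Definition opg (g : V -> V -> R) (p : V -> R) : V -> R :=
  fun y => \sum_x p x * g x y.

Fixpoint run (t : nat) (h : nat -> V -> V -> R) (p : V -> R) : V -> R :=
  if t is t'.+1 then run t' (fun k => h k.+1) (opg (h 0%N) p) else p.

Definition consf t (x : V) (w : {ffun 'I_t.+1 -> V}) : {ffun 'I_t.+2 -> V} :=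
  [ffun i : 'I_t.+2 => if val i is j.+1 then w (inord j) else x].

Lemma consf0 t x (w : {ffun 'I_t.+1 -> V}) (k : 'I_t.+2) :
  val k = 0%N -> consf x w k = x.
Proof. by move=> hk; rewrite ffunE hk. Qed.

Lemma consfS t x (w : {ffun 'I_t.+1 -> V}) (k : 'I_t.+2) (j : 'I_t.+1) :
  val k = (val j).+1 -> consf x w k = w j.
Proof.
move=> hk; rewrite ffunE hk; congr (w _); apply: val_inj.
by rewrite /= inordK.
Qed.

Lemma sum_ffunS t (F : {ffun 'I_t.+2 -> V} -> R) :
  \sum_w F w = \sum_x \sum_(w : {ffun 'I_t.+1 -> V}) F (consf x w).
Proof.
rewrite pair_big /=.
rewrite (reindex (fun p : V * {ffun 'I_t.+1 -> V} => consf p.1 p.2)) //=.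
exists (fun w : {ffun 'I_t.+2 -> V} => (w ord0, [ffun j : 'I_t.+1 => w (lift ord0 j)])).
  move=> [x w] _ /=; congr pair; first by rewrite consf0.
  apply/ffunP => j; rewrite ffunE; apply: consfS => /=; by [].
move=> w _ /=; apply/ffunP => k; case hk: (val k) => [|j].
  by rewrite consf0 //; congr (w _); apply: val_inj.
have hj : (j < t.+1)%N by have := ltn_ord k; rewrite hk.
rewrite (@consfS _ _ _ _ (Ordinal hj)) //= ffunE; congr (w _); apply: val_inj.
by rewrite /= hk.
Qed.

Lemma sum_ffun1 (F : {ffun 'I_1 -> V} -> R) :
  \sum_w F w = \sum_x F [ffun _ => x].
Proof.
rewrite (reindex (fun x : V => [ffun _ : 'I_1 => x])) //.
exists (fun w : {ffun 'I_1 -> V} => w ord0); first by move=> x _; rewrite ffunE.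
move=> w _; apply/ffunP => k; rewrite ffunE; congr (w _); apply: val_inj.
by case: k => [[]].
Qed.

Lemma sum_run t (h : nat -> V -> V -> R) (p : V -> R) :
  \sum_(w : {ffun 'I_t.+1 -> V}) p (w ord0) *
     \prod_(i < t) h i (w (widen_ord (leqnSn t) i)) (w (lift ord0 i))
  = \sum_y run t h p y.
Proof.
elim: t h p => [|t IH] h p /=.
  by rewrite sum_ffun1; apply: eq_bigr => x _; rewrite big_ord0 mulr1 ffunE.
rewrite sum_ffunS -IH.
under eq_bigr => x _.
  under eq_bigr => w _.
    rewrite big_ord_recl (@consf0 _ _ _ ord0) // (@consf0 _ _ _ (widen_ord _ ord0)) // (@consfS _ _ _ (lift ord0 ord0) ord0) //.
    under eq_bigr => i _.
      rewrite (@consfS _ _ _ _ (widen_ord (leqnSn t) i)) /=; last by [].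
      rewrite (@consfS _ _ _ _ (lift ord0 i)) /=; last by [].
      rewrite /bump /= add1n.
    over.
  rewrite mulrA.
  over.
over.
rewrite exchange_big /=; apply: eq_bigr => w _.
by rewrite -big_distrl /=.
Qed.


Lemma run_ext t h h' p p' :
  (forall k, (k < t)%N -> forall x y, h k x y = h' k x y) ->
  (forall x, p x = p' x) -> forall y, run t h p y = run t h' p' y.
Proof.
elim: t h h' p p' => [|t IH] h h' p p' hh hp y /=; first exact: hp.
apply: IH => [k hk x z|x]; first exact: hh.
by rewrite /opg; apply: eq_bigr => z _; rewrite hp hh.
Qed.

Lemma run_add a b h p y :
  run (a + b) h p y = run b (fun k => h (k + a)%N) (run a h p) y.
Proof.
elim: a h p => [|a IH] h p /=.
  by apply: run_ext => // k _ x z; rewrite addn0.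
rewrite IH; apply: run_ext => // k _ x z; by rewrite addnS.
Qed.

Local Notation trans := (@trans R V e).
Local Notation step := (@step R V e).
Local Notation stat := (@stat R V e).
Local Notation deg := (deg e).
Local Notation dirac := (@Defs.dirac R V).

Lemma step_ext p p' : (forall x, p x = p' x) -> forall y, step p y = step p' y.
Proof. by move=> hp y; rewrite /step; apply: eq_bigr => x _; rewrite hp. Qed.

Lemma iter_ext n p p' : (forall x, p x = p' x) -> forall y, iter n step p y = iter n step p' y.
Proof.
move=> hp; elim: n => [|n IH] y /=; first exact: hp.
by apply: step_ext => x; apply: IH.
Qed.

Lemma run_trans n h p :
  (forall k, (k < n)%N -> forall x y, h k x y = trans x y) ->
  forall y, run n h p y = iter n step p y.
Proof.
elim: n h p => [|n IH] h p hh y //=.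
rewrite IH; last by move=> k hk x z; apply: hh.
rewrite -[step (iter n step p) y]/(iter n.+1 step p y) iterSr; apply: iter_ext => x.
by rewrite /opg /step; apply: eq_bigr => z _; rewrite hh.
Qed.

Hypothesis hdeg : forall v, (0 < deg v)%N.
Hypothesis hsym : symmetric e.

Lemma sum_trans u : \sum_w trans u w = 1.
Proof.
rewrite /Defs.trans -big_mkcond /= sumr_const.
have -> : #|[pred w | e u w]| = deg u by rewrite /deg /Defs.deg cardsE.
rewrite -[_ *+ deg u]mulr_natr mulVf // pnatr_eq0 -lt0n; exact: hdeg.
Qed.

Lemma step_mass p : \sum_y step p y = \sum_y p y.
Proof.
rewrite /Defs.step exchange_big /=; apply: eq_bigr => x _.
by rewrite -mulr_sumr sum_trans mulr1.
Qed.

Lemma trans_ge0 x y : 0 <= trans x y.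
Proof. by rewrite /Defs.trans; case: (e x y) => //; rewrite invr_ge0 ler0n. Qed.

Lemma step_ge0 p : (forall x, 0 <= p x) -> forall y, 0 <= step p y.
Proof.
move=> hp y; apply: sumr_ge0 => x _; apply: mulr_ge0 => //; exact: trans_ge0.
Qed.

Lemma iter_mass n p : \sum_y iter n step p y = \sum_y p y.
Proof. elim: n => [|n IH] //=; by rewrite step_mass. Qed.

Lemma iter_ge0 n p : (forall x, 0 <= p x) -> forall y, 0 <= iter n step p y.
Proof. move=> hp; elim: n => [|n IH] //=; exact: step_ge0. Qed.

Lemma stat_step y : step stat y = stat y.
Proof.
rewrite /Defs.step.
transitivity (\sum_x (if e x y then (2 * (nedges e)%:R)^-1 else 0 : R)).
  apply: eq_bigr => x _; rewrite /Defs.trans /Defs.stat; case: ifP; last by rewrite mulr0.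
  move=> _; rewrite mulrAC mulfV ?mul1r // pnatr_eq0 -lt0n; exact: hdeg.
rewrite -big_mkcond /= sumr_const /Defs.stat /Defs.deg cardsE.
have -> : #|e^~ y| = #|e y| by apply: eq_card => x; rewrite unfold_in /= hsym.
by rewrite [RHS]mulr_natl.
Qed.

Lemma iter_stat n y : iter n step stat y = stat y.
Proof.
elim: n y => [|n IH] y //=.
by rewrite (step_ext IH) stat_step.
Qed.

Lemma iter_lin n p y : iter n step p y = \sum_b p b * iter n step (dirac b) y.
Proof.
elim: n y => [|n IH] y.
  rewrite /= (bigD1 y) //= /dirac eqxx mulr1 big1 ?addr0 // => b hb.
  by rewrite eq_sym (negbTE hb) mulr0.
have E q : step q y = \sum_u q u * trans u y by [].
rewrite iterS E.
under eq_bigr => u _ do rewrite (IH u) big_distrl /=.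
rewrite exchange_big /=; apply: eq_bigr => b _.
by rewrite E mulr_sumr; apply: eq_bigr => u _; rewrite mulrA.
Qed.


Lemma run_tail t j h p :
  (j < t)%N -> (forall k, (j < k)%N -> (k < t)%N -> forall x y, h k x y = trans x y) ->
  \sum_y run t h p y = \sum_y opg (h j) (run j h p) y.
Proof.
move=> hjt hh.
have -> : t = (j + (t - j.+1).+1)%N by lia.
under eq_bigr => y _ do rewrite run_add /=.
transitivity (\sum_y iter (t - j.+1) step (opg (h j) (run j h p)) y).
  apply: eq_bigr => y _.
  rewrite (run_trans (h := fun k => h (k.+1 + j)%N)); last first.
    by move=> k hk x z; apply: hh; lia.
  apply: iter_ext => x; rewrite /opg; apply: eq_bigr => z _.
  by rewrite add0n.
by rewrite iter_mass.
Qed.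

Lemma run_mid i j h p :
  (i < j)%N -> (forall k, (i < k)%N -> (k < j)%N -> forall x y, h k x y = trans x y) ->
  forall y, run j h p y = iter (j - i.+1) step (opg (h i) (run i h p)) y.
Proof.
move=> hij hh y.
have -> : j = (i + (j - i.+1).+1)%N by lia.
rewrite run_add /=.
rewrite (run_trans (h := fun k => h (k.+1 + i)%N)); last first.
  by move=> k hk x z; apply: hh; lia.
have -> : (i + (j - i.+1).+1 - i.+1 = j - i.+1)%N by lia.
apply: iter_ext => x; rewrite /opg; apply: eq_bigr => z _.
by rewrite add0n.
Qed.

Lemma opg_ext g g' p p' : (forall x y, g x y = g' x y) -> (forall x, p x = p' x) ->
  forall y, opg g p y = opg g' p' y.
Proof. by move=> hg hp y; apply: eq_bigr => x _; rewrite hg hp. Qed.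

Variable S : {set {set V}}.

Definition sind (x y : V) : R := if [set x; y] \in S then 1 else 0.
Definition NS : nat := #|[set p : V * V | e p.1 p.2 && ([set p.1; p.2] \in S)]|.
Local Notation E := (nedges e).

Lemma sum_pairs (c : R) :
  \sum_y \sum_x (if e x y && ([set x; y] \in S) then c else 0) = c * NS%:R.
Proof.
rewrite exchange_big pair_big /= -big_mkcond /= sumr_const /NS cardsE.
by rewrite mulr_natr.
Qed.

Lemma mass_mask_stat :
  \sum_y opg (fun x y => trans x y * sind x y) stat y = NS%:R / (2 * E%:R).
Proof.
rewrite mulrC -sum_pairs; apply: eq_bigr => y _; apply: eq_bigr => x _.
rewrite /sind /Defs.trans /Defs.stat.
case: (e x y); case: ([set x; y] \in S); rewrite ?mulr0 ?mul0r ?mulr1 //=.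
  2: by rewrite mulr0.
rewrite mulrAC mulfV ?mul1r // pnatr_eq0 -lt0n; exact: hdeg.
Qed.

Variables (T : nat) (delta : R).
Hypothesis hdelta : 0 <= delta.
Hypothesis hmix : forall v w, iter T step (dirac v) w <= stat w + delta.

Lemma iter_bound g b x : (T <= g)%N -> iter g step (dirac b) x <= stat x + delta.
Proof.
move=> hg; rewrite -(subnKC hg) iterD iter_lin.
set pi := iter (g - T) step (dirac b).
have pi0 : forall z, 0 <= pi z.
  move=> z; apply: iter_ge0 => u; rewrite /dirac; case: ifP => _ //; exact: ler01.
have pi1 : \sum_z pi z = 1.
  rewrite /pi iter_mass (bigD1 b) //= /dirac eqxx big1 ?addr0 // => u hu.
  by rewrite (negbTE hu).
apply: le_trans (_ : \sum_z pi z * (stat x + delta) <= _).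
  by apply: ler_sum => z _; apply: ler_wpM2l => //; apply: hmix.
by rewrite -mulr_suml pi1 mul1r.
Qed.

Lemma pair_mass mu g : (forall x, 0 <= mu x) -> (T <= g)%N ->
  \sum_y opg (fun x y => trans x y * sind x y) (iter g step mu) y
  <= (\sum_b mu b) * NS%:R * ((2 * E%:R)^-1 + delta).
Proof.
move=> hmu hg.
rewrite -mulrA [NS%:R * _]mulrC mulrA -sum_pairs; apply: ler_sum => y _.
apply: ler_sum => x _.
have hr : iter g step mu x <= (\sum_b mu b) * (stat x + delta).
  rewrite iter_lin mulr_suml; apply: ler_sum => b _.
  by apply: ler_wpM2l => //; apply: iter_bound.
have hM : 0 <= \sum_b mu b by apply: sumr_ge0.
rewrite /sind /Defs.trans.
case: (e x y); case: ([set x; y] \in S); rewrite ?mulr0 ?mul0r ?mulr1 //=.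
2: by rewrite mulr0.
apply: le_trans (_ : (\sum_b mu b) * (stat x + delta) * (deg x)%:R^-1 <= _).
  by apply: ler_wpM2r => //; rewrite invr_ge0 ler0n.
rewrite -mulrA; apply: ler_wpM2l => //.
have hd : 0 < (deg x)%:R :> R by rewrite ltr0n; exact: hdeg.
rewrite mulrDl; apply: lerD.
  rewrite /Defs.stat mulrAC mulfV ?mul1r // gt_eqF //.
apply: ler_piMr => //; rewrite invf_le1 // ler1n; exact: hdeg.
Qed.


Variable t : nat.
Local Notation wid := (widen_ord (leqnSn t)).

Definition ind (i : 'I_t) (w : {ffun 'I_t.+1 -> V}) : R :=
  sind (w (wid i)) (w (lift ord0 i)).

Definition H1 (i : nat) (k : nat) (x y : V) : R :=
  trans x y * (if k == i then sind x y else 1).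
Definition H2 (i j : nat) (k : nat) (x y : V) : R :=
  trans x y * (if k == i then sind x y else 1) * (if k == j then sind x y else 1).

Lemma prod_if (i : 'I_t) (F : 'I_t -> R) :
  \prod_(k < t) (if (k:nat) == (i:nat) then F k else 1) = F i.
Proof.
rewrite (bigD1 i) //= eqxx big1 ?mulr1 // => k hk.
by rewrite ifN.
Qed.

Lemma wp1 (i : 'I_t) w : @walk_prob R V e t w * ind i w =
  stat (w ord0) * \prod_(k < t) H1 i k (w (wid k)) (w (lift ord0 k)).
Proof.
rewrite /Defs.walk_prob -mulrA; congr (_ * _).
by rewrite /H1 big_split /= prod_if.
Qed.

Lemma wp2 (i j : 'I_t) w : @walk_prob R V e t w * ind i w * ind j w =
  stat (w ord0) * \prod_(k < t) H2 i j k (w (wid k)) (w (lift ord0 k)).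
Proof.
rewrite /Defs.walk_prob -!mulrA; congr (_ * (_ * _)).
by rewrite /H2 big_split big_split /= !prod_if mulrA.
Qed.

Lemma exp1 (i : 'I_t) : \sum_w @walk_prob R V e t w * ind i w = NS%:R / (2 * E%:R).
Proof.
under eq_bigr do rewrite wp1.
rewrite sum_run (@run_tail _ i) //; last first.
  by move=> k hik hk x y; rewrite /H1 ifN ?mulr1 //; rewrite neq_ltn hik orbT.
rewrite -mass_mask_stat; apply: eq_bigr => y _; apply: opg_ext.
  by move=> x z; rewrite /H1 eqxx.
move=> x; rewrite (run_trans (n := i)) ?iter_stat //.
by move=> k hk u v; rewrite /H1 ifN ?mulr1 // ltn_eqF.
Qed.

Lemma mu_ge0 x : 0 <= opg (fun x y => trans x y * sind x y) stat x.
Proof.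
apply: sumr_ge0 => u _; apply: mulr_ge0.
  by rewrite /Defs.stat divr_ge0 // ?ler0n // mulr_ge0 ?ler0n.
apply: mulr_ge0; first exact: trans_ge0.
by rewrite /sind; case: ifP.
Qed.

Lemma exp2 (i j : 'I_t) : (i + T < j)%N ->
  \sum_w @walk_prob R V e t w * ind i w * ind j w <=
  NS%:R / (2 * E%:R) * NS%:R * ((2 * E%:R)^-1 + delta).
Proof.
move=> hij.
under eq_bigr do rewrite wp2.
rewrite sum_run (@run_tail _ j) //; last first.
  by move=> k hjk hk x y; rewrite /H2 !ifN ?mulr1 //; apply/eqP; lia.
rewrite -mass_mask_stat.
set mu := opg (fun x y => trans x y * sind x y) stat.
apply: le_trans (pair_mass (mu := mu) (g := (j - i.+1)%N) mu_ge0 _); last by lia.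
rewrite le_eqVlt; apply/orP; left; apply/eqP.
apply: eq_bigr => y _; apply: opg_ext.
  by move=> x z; rewrite /H2 eqxx ifN ?mulr1 //; apply/eqP; lia.
move=> x; rewrite (run_mid (i := i)); last first.
- by move=> k hik hkj u v; rewrite /H2 !ifN ?mulr1 //; apply/eqP; lia.
- lia.
apply: iter_ext => u; apply: opg_ext.
  by move=> v w; rewrite /H2 eqxx ifN ?mulr1 //; apply/eqP; lia.
move=> v; rewrite (run_trans (n := i)) ?iter_stat //.
by move=> k hk a b; rewrite /H2 !ifN ?mulr1 //; apply/eqP; lia.
Qed.


Local Notation wp := (@walk_prob R V e t).
Local Notation q := (NS%:R / (2 * E%:R)).
Local Notation B := (NS%:R / (2 * E%:R) * NS%:R * ((2 * E%:R)^-1 + delta)).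

Lemma ind01 i w : ind i w * ind i w = ind i w.
Proof. by rewrite /ind /sind; case: ifP; rewrite ?mulr1 ?mulr0. Qed.

Lemma ind_ge0 i w : 0 <= ind i w.
Proof. by rewrite /ind /sind; case: ifP. Qed.

Lemma stat_ge0 x : 0 <= stat x.
Proof. by rewrite /Defs.stat divr_ge0 // ?ler0n // mulr_ge0 ?ler0n. Qed.

Lemma wp_ge0 w : 0 <= wp w.
Proof.
rewrite /Defs.walk_prob; apply: mulr_ge0; first exact: stat_ge0.
apply: prodr_ge0 => i _; exact: trans_ge0.
Qed.

Variables (m : nat) (sigma : 'I_m -> 'I_t).
Hypothesis hsig : forall s s', s != s' ->
  ((sigma s + T < sigma s')%N || (sigma s' + T < sigma s)%N).

Definition Nw w := \sum_s ind (sigma s) w.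

Lemma pointwise w :
  3 / 2 * (wp w * Nw w) - 1 / 2 * (wp w * Nw w * Nw w) <=
  (if traverses S w then wp w else 0).
Proof.
set N := Nw w.
have hN : N = (#|[set s : 'I_m | [set w (wid (sigma s)); w (lift ord0 (sigma s))] \in S]|)%:R.
  rewrite /N /Nw /ind /sind -big_mkcond /= sumr_const cardsE.
  by rewrite /= -[in RHS]mulr_natr mul1r.
have hw := wp_ge0 w.
set n := #|_| in hN.
case: (posnP n) => hn.
  rewrite hN hn !mulr0 subr0; case: ifP => //.
have htr : traverses S w.
  move: hn; rewrite card_gt0 => /set0Pn [s]; rewrite inE => hs.
  by apply/existsP; exists (sigma s).
rewrite htr.
have -> : 3 / 2 * (wp w * N) - 1 / 2 * (wp w * N * N) = wp w * (3 / 2 * N - 1 / 2 * (N * N)) by ring.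
rewrite -[X in _ <= X]mulr1; apply: ler_wpM2l => //.
case: (ltngtP n 1) => h1.
- lia.
- have h2 : 2 <= N by rewrite hN ler_nat.
  nra.
- rewrite hN h1. lra.
Qed.


Lemma sumX : \sum_w wp w * Nw w = m%:R * q.
Proof.
under eq_bigr do rewrite /Nw mulr_sumr.
rewrite exchange_big /=.
under eq_bigr do rewrite exp1.
by rewrite sumr_const card_ord [m%:R * _]mulr_natl.
Qed.

Lemma B_ge0 : 0 <= B.
Proof.
apply: mulr_ge0; last by apply: addr_ge0 => //; rewrite invr_ge0 mulr_ge0 ?ler0n.
by apply: mulr_ge0 => //; rewrite divr_ge0 // ?ler0n // mulr_ge0 ?ler0n.
Qed.

Lemma sumY : \sum_w wp w * Nw w * Nw w <= m%:R * q + m%:R * m%:R * B.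
Proof.
have -> : \sum_w wp w * Nw w * Nw w =
   \sum_s \sum_s' \sum_w wp w * ind (sigma s) w * ind (sigma s') w.
  transitivity (\sum_w \sum_s \sum_s' wp w * ind (sigma s) w * ind (sigma s') w).
    apply: eq_bigr => w _; rewrite /Nw -mulrA mulr_suml mulr_sumr.
    apply: eq_bigr => s _; rewrite mulr_sumr mulr_sumr.
    by apply: eq_bigr => s' _; rewrite !mulrA.
  rewrite exchange_big /=; apply: eq_bigr => s _.
  by rewrite exchange_big.
have -> : m%:R * q + m%:R * m%:R * B = \sum_(s < m) (q + m%:R * B).
  by rewrite sumr_const card_ord -[_ *+ m]mulr_natl; ring.
apply: ler_sum => s _.
rewrite (bigD1 s) //=; apply: lerD.
  rewrite -(exp1 (sigma s)) le_eqVlt; apply/orP; left; apply/eqP.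
  by apply: eq_bigr => w _; rewrite -mulrA ind01.
apply: le_trans (_ : \sum_(s' | s' != s) B <= _).
  apply: ler_sum => s' hs'.
  case/orP: (hsig hs') => h.
    by under eq_bigr do rewrite mulrAC; apply: (exp2 h).
  exact: (exp2 h).
apply: le_trans (_ : \sum_(s' < m) B <= _).
  rewrite [X in _ <= X](bigD1 s) //= lerDr; exact: B_ge0.
by rewrite sumr_const card_ord -[_ *+ m]mulr_natl mulrC.
Qed.

Lemma bonf : 3 / 2 * (m%:R * q) - 1 / 2 * (m%:R * q + m%:R * m%:R * B) <= @P_ge1 R V e S t.
Proof.
rewrite /P_ge1 big_mkcond /=.
apply: le_trans (ler_sum _ (fun w _ => pointwise w)).
rewrite sumrB -!mulr_sumr sumX.
rewrite lerD2l lerN2; apply: ler_wpM2l; first lra.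
exact: sumY.
Qed.

End Aux.

Section Count.
Variables (V : finType) (e : rel V).
Hypothesis hirr : irreflexive e.
Hypothesis hsym : symmetric e.

Lemma set2_eq (x y u v : V) : u != v ->
  ([set x; y] == [set u; v]) = ((x == u) && (y == v)) || ((x == v) && (y == u)).
Proof.
move=> huv; apply/idP/idP.
  move/eqP=> h.
  have hu : u \in [set x; y] by rewrite h !inE eqxx.
  have hv : v \in [set x; y] by rewrite h !inE eqxx orbT.
  have hx : x \in [set u; v] by rewrite -h !inE eqxx.
  have hy : y \in [set u; v] by rewrite -h !inE eqxx orbT.
  move: hu hv hx hy; rewrite !inE.
  case/orP=> /eqP hu; case/orP=> /eqP hv; case/orP=> /eqP hx; case/orP=> /eqP hy;
    subst; rewrite ?eqxx ?andbT ?orbT //=; by rewrite eqxx in huv.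
case/orP=> /andP [/eqP -> /eqP ->] //; by rewrite setUC.
Qed.

Lemma NS_card (S : {set {set V}}) : S \subset edges e -> NS e S = (2 * #|S|)%N.
Proof.
move=> hS.
rewrite /NS -sum1_card (partition_big (fun p : V * V => [set p.1; p.2]) (mem S)); last first.
  by move=> p; rewrite inE => /andP [].
rewrite mulnC -sum_nat_const /=; apply: eq_bigr => A hA.
have := subsetP hS A hA; rewrite inE => /existsP [u] /existsP [v] /andP [huv /eqP hAe].
have nuv : u != v by apply/eqP => h; subst; rewrite hirr in huv.
have hc : #|[set (u, v); (v, u)]| = 2%N.
  by rewrite cards2 xpair_eqE negb_and nuv.
rewrite -hc -sum1_card; apply: eq_bigl => p.
rewrite !inE hAe set2_eq //.
case: p => x y /=; rewrite !xpair_eqE.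
apply/idP/idP; first by case/andP.
have hA' : [set u; v] \in S by rewrite -hAe.
case/orP => /andP [/eqP -> /eqP ->]; rewrite ?eqxx ?andbT ?orbT //=.
  by rewrite huv hA'.
by rewrite hsym huv setUC hA'.
Qed.

Lemma NS_le (S : {set {set V}}) : (NS e S <= #|V| * #|V|)%N.
Proof. by rewrite /NS -card_prod; apply: max_card. Qed.

End Count.

Lemma ar_hs (s d T t r : nat) : (s <= d)%N -> (0 < t)%N -> (t - 1)%N = (d * T.+1 + r)%N ->
  (s * T.+1 < t)%N.
Proof. move=> h1 h2 h3; have := leq_mul h1 (leqnn T.+1); lia. Qed.

Lemma ar_sig (s s' T : nat) : (s < s')%N -> (s * T.+1 + T < s' * T.+1)%N.
Proof. move=> h; have := leq_mul h (leqnn T.+1); rewrite mulSn; lia. Qed.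

Lemma ar_mt (d T t r : nat) : (0 < t)%N -> (t - 1)%N = (d * T.+1 + r)%N -> (r < T.+1)%N ->
  (t <= d.+1 * T.+1)%N.
Proof. rewrite mulSn; lia. Qed.

Lemma ar_MK (M K E r : nat) : (0 < M)%N -> E = (M * K + r)%N -> (r < K)%N ->
  (E <= 2 * (M * K))%N.
Proof. move=> hM h1 h2; have := leq_mul hM (leqnn K); rewrite mul1n; lia. Qed.

Unset Implicit Arguments.

Theorem lemma2 (R : realFieldType) (c Tmax alpha : R) :
  1 <= c ->
  exists2 C : R, 0 < C & exists D0 : nat,
    forall (V : finType) (e : rel V),
      simple_graph e -> connected_graph e ->
      forall D : nat, (D0 <= D)%N -> @uniform R V e D c ->
      forall T : nat,
        @is_mixing_time R V e ((2 * c * (#|V|)%:R) ^+ 2)^-1 T ->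
        T%:R <= Tmax ->
      forall S : {set {set V}}, S \subset edges e ->
      forall t : nat, t%:R * (#|S|)%:R <= alpha * (nedges e)%:R ->
        C * (t%:R * (#|S|)%:R) / (T%:R * (nedges e)%:R) <= @P_ge1 R V e S t.
Proof.
move=> hc.
have ha := normr_ge0 alpha.
exists ((8 * (1 + `|alpha|))^-1); first by rewrite invr_gt0; lra.
exists 1%N.
move=> V e [hsym hirr] _ D hD hunif T [hmixT _] _ S hS t hta.
set C := (8 * (1 + `|alpha|))^-1.
have hC0 : 0 < C by rewrite invr_gt0; lra.
have hC1 : C * (1 + `|alpha|) = 1 / 8 by rewrite /C; field; lra.
have hdeg : forall v, (0 < deg e v)%N := fun v => leq_trans hD (hunif v).1.
have hP0 : 0 <= @P_ge1 R V e S t.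
  by apply: sumr_ge0 => w _; apply: wp_ge0.
case: (posnP T) => hT.
  by rewrite hT mul0r invr0 mulr0.
case: (posnP t) => ht.
  have -> : t%:R = 0 :> R by rewrite ht.
  by rewrite mul0r mulr0 mul0r.
set K := #|S|.
case: (posnP K) => hK.
  have -> : K%:R = 0 :> R by rewrite hK.
  by rewrite !mulr0 mul0r.
set E := nedges e.
set n := #|V|.
have hKE : (K <= E)%N := subset_leq_card hS.
have hNS : NS e S = (2 * K)%N := NS_card hirr hsym hS.
have hNE : (2 * E <= n * n)%N.
  by rewrite -(NS_card hirr hsym (subxx _)); exact: NS_le.
set delta := ((2 * c * n%:R) ^+ 2)^-1.
have hdelta : 0 <= delta by rewrite invr_ge0 sqr_ge0.
have hmix : forall v w, iter T (step e) (dirac R v) w <= stat R e w + delta.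
  move=> v w; have := hmixT v w; rewrite /dist_after => /ler_normlP [h1 h2]; rewrite /delta /n; lra.
set d := ((t - 1) %/ T.+1)%N.
set m0 := d.+1.
set M := (E %/ K)%N.
set m := minn m0 M.
have hdiv1 := divn_eq (t - 1) T.+1.
have hmod1 := ltn_pmod (t - 1) (ltn0Sn T).
have hdiv2 := divn_eq E K.
have hmod2 := ltn_pmod E hK.
have hM1 : (0 < M)%N by rewrite divn_gt0.
have hs : forall s : 'I_m, (s * T.+1 < t)%N.
  move=> s; have h1 : (s <= d)%N.
    by have := leq_trans (ltn_ord s) (geq_minl _ _).
  exact: ar_hs h1 ht hdiv1.
pose sigma := fun s : 'I_m => Ordinal (hs s).
have hsig : forall s s' : 'I_m, s != s' ->
    ((sigma s + T < sigma s')%N || (sigma s' + T < sigma s)%N).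
  move=> s s' hne; rewrite /=.
  case: (ltngtP s s') => h.
  - by apply/orP; left; apply: ar_sig.
  - by apply/orP; right; apply: ar_sig.
  - by move: hne; rewrite (val_inj h) eqxx.
have hb := bonf hdeg hsym S hdelta hmix hsig.
rewrite hNS -/E in hb.
have hE0 : (0 < E)%N := leq_trans hK hKE.
have hEr : 0 < E%:R :> R by rewrite ltr0n.
have hEn : E%:R != 0 :> R by rewrite gt_eqF.
have hKr : 0 < K%:R :> R by rewrite ltr0n.
have hTr : 1 <= T%:R :> R by rewrite ler1n.
have hTn : T%:R != 0 :> R by apply/eqP => h; rewrite h in hTr; lra.
have hn : (0 < n)%N.
  move: hNE; case: (posnP n) => [->|//]; rewrite muln0 leqn0 muln_eq0 /=.
  by rewrite (gtn_eqF hE0).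
set q := (K%:R / E%:R : R).
have hq0 : 0 <= q by rewrite /q divr_ge0 // ltW.
have hq2 : (2 * K)%:R / (2 * E%:R) = q :> R by rewrite natrM /q; field.
rewrite hq2 in hb.
have hd8 : delta <= (8 * E%:R)^-1.
  have hn2 : (2 * E)%:R <= (n * n)%:R :> R by rewrite ler_nat.
  rewrite !natrM in hn2.
  have hnr : 1 <= n%:R :> R by rewrite ler1n.
  have hcc : 0 <= (c - 1) * (c + 1) by apply: mulr_ge0; lra.
  have hnn : 0 <= (c * c - 1) * (n%:R * n%:R) by apply: mulr_ge0; lra.
  have hcn : 0 < 2 * c * n%:R by apply: mulr_gt0; lra.
  rewrite /delta lef_pV2 ?posrE; last 2 first.
  - exact: exprn_gt0.
  - lra.
  have -> : (2 * c * n%:R) ^+ 2 = 4 * (c * c) * (n%:R * n%:R) by rewrite expr2; ring.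
  lra.
have hB : q * (2 * K)%:R * ((2 * E%:R)^-1 + delta) <= 5 / 4 * (q * q).
  apply: le_trans (_ : q * (2 * K)%:R * ((2 * E%:R)^-1 + (8 * E%:R)^-1) <= _).
    apply: ler_wpM2l; first by apply: mulr_ge0 => //; rewrite ler0n.
    by rewrite lerD2l.
  rewrite le_eqVlt; apply/orP; left; apply/eqP.
  by rewrite /q natrM; field.
set x := (m%:R : R).
have hx0 : 0 <= x by rewrite /x ler0n.
have hmM : (m <= M)%N by apply: geq_minr.
have hMK : (M * K <= E)%N by exact: leq_trunc_div.
have hmK : (m * K <= E)%N by apply: leq_trans (leq_mul hmM (leqnn K)) hMK.
have hy1 : x * q <= 1.
  by rewrite /q mulrA -natrM ler_pdivrMr // mul1r ler_nat.
have hy0 : 0 <= x * q by apply: mulr_ge0.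
have hP : 3 / 8 * (x * q) <= P_ge1 R e S t.
  have h1 : x * x * (q * (2 * K)%:R * ((2 * E%:R)^-1 + delta)) <= x * x * (5 / 4 * (q * q)).
    by apply: ler_wpM2l => //; apply: mulr_ge0.
  have h2 : x * x * (5 / 4 * (q * q)) = 5 / 4 * ((x * q) * (x * q)) by ring.
  rewrite h2 in h1.
  move: hb h1 hy0 hy1.
  set Bx := x * x * _.
  set y := x * q.
  move=> hb h1 hy0 hy1.
  have h3 : 0 <= y * (1 - y) by apply: mulr_ge0; lra.
  lra.
have hZ : C * (t%:R * K%:R) / (T%:R * E%:R) = C * ((t%:R / T%:R) * q).
  by rewrite /q; field; rewrite hEn hTn.
rewrite hZ.
have hC8 : C <= 1 / 8.
  have : 0 <= C * `|alpha| by apply: mulr_ge0 => //; lra.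
  lra.
case: (leqP m0 M) => hm0M.
- have hm : m = m0 by apply/minn_idPl.
  have hmt : (t <= m0 * T.+1)%N by exact: ar_mt ht hdiv1 hmod1.
  have hmtr : t%:R <= x * (T%:R + 1).
    by rewrite /x hm natr1 -natrM ler_nat.
  have hux : t%:R / T%:R <= 2 * x.
    rewrite ler_pdivrMr; last lra.
    have : 0 <= x * (T%:R - 1) by apply: mulr_ge0 => //; lra.
    lra.
  have h4 : (t%:R / T%:R) * q <= 2 * x * q by apply: ler_wpM2r.
  have h5 : C * ((t%:R / T%:R) * q) <= C * (2 * x * q) by apply: ler_wpM2l => //; lra.
  have h6 : C * (x * q) <= 1 / 8 * (x * q) by apply: ler_wpM2r.
  have h7 : C * (2 * x * q) = 2 * (C * (x * q)) by ring.
  lra.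
- have hm : m = M by apply/minn_idPr; apply: ltnW.
  have h2MK : (E <= 2 * (M * K))%N.
    exact: ar_MK hM1 hdiv2 hmod2.
  have hy2 : 1 / 2 <= x * q.
    rewrite /q mulrA ler_pdivlMr // /x hm -natrM.
    have : E%:R <= (2 * (M * K))%:R :> R by rewrite ler_nat.
    rewrite natrM; lra.
  have htq : t%:R * q <= alpha.
    by rewrite /q mulrA ler_pdivrMr.
  have htq0 : 0 <= t%:R * q by apply: mulr_ge0 => //; rewrite ler0n.
  have huq : (t%:R / T%:R) * q <= `|alpha|.
    rewrite mulrAC ler_pdivrMr; last lra.
    have := ler_norm alpha.
    have : 0 <= `|alpha| * (T%:R - 1) by apply: mulr_ge0 => //; lra.
    lra.
  have h5 : C * ((t%:R / T%:R) * q) <= C * `|alpha| by apply: ler_wpM2l => //; lra.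
  lra.
Qed.
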